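(* Let $S=S'\wedge C$ be a scheduling problem on $n$ elements where $C$ is a contractible clause, let $V(C)=O_1\uplus\cdots\uplus O_k$ be the decomposition into $\sim_C$ equivalence classes ordered so that $O_i>O_j$ for $i<j$, and let $r_i=|O_i|-1$. Then $$\mathcal{S}_{S'\wedge\neg C}=\left(\mathcal{S}_{S'\downarrow_{(r_1,\dots,r_k)}}\right)\uparrow^{(r_1,\dots,r_k)}.$$
   Context: A scheduling problem on $n$ elements is a Boolean formula over atoms $(x_i\le x_j)$, $i,j\in[n]$, with $(x_i=x_j)=(x_i\le x_j)\wedge(x_j\le x_i)$ and $(x_i\ne x_j)=\neg(x_i=x_j)$. A solution is $f:[n]\to\mathbb{P}=\{1,2,\dots\}$ making it true with $x_i=f(i)$; $\mathcal{S}_S=\sum_f y_{f(1)}\cdots y_{f(n)}$ over solutions, in noncommuting variables $y_1,y_2,\dots$. A formula $C$ given as $C=\bigvee_{(i,j)\in I}(x_i\ne x_j)$ with $I\subseteq[n]\times[n]$ is edge-like; $V(C)$ is the set of indices $i$ with $x_i$ appearing in $C$, and $\sim_C$ is the equivalence relation on $V(C)$ generated by $i\sim j$ for $(i,j)\in I$. For disjoint sets, $A>B$ means $a>b$ for all $a\in A,b\in B$. $C$ is a contractible clause if it is edge-like, $V(C)=\{m,m+1,\dots,n\}$ for some $1\le m\le n$, and the $\sim_C$ classes can be ordered $O_1,\dots,O_k$ with $O_i>O_j$ for $i<j$. With $r=\sum_i r_i$, the contraction $S'\downarrow_{(r_1,\dots,r_k)}$ is the scheduling problem on $n-r$ elements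 obtained from $S'$ by replacing each variable $x_j$ by $x_{\psi(j)}$, where $\psi(j)=j$ for $j<m$ and $\psi(j)=m+k-i$ for $j\in O_i$ (i.e. each class is identified to one variable and indices are standardized to $[n-r]$ preserving order). Induction: for nonnegative integers $r_1,\dots,r_k$ and a monomial $y_{i_1}\cdots y_{i_p}$ with $k\le p$, $y_{i_1}\cdots y_{i_p}\uparrow^{(r_1,\dots,r_k)}=y_{i_1}\cdots y_{i_{p-k}}y_{i_{p-k+1}}^{1+r_k}\cdots y_{i_p}^{1+r_1}$, extended linearly (termwise). *)

(* Defs.v *)
From mathcomp Require Import all_boot.
Set Implicit Arguments. Unset Strict Implicit. Unset Printing Implicit Defensive.

(* Boolean formulas over atoms (x_i <= x_j); indices are 1-based. *)
Inductive formula : Type :=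
| FTrue | FFalse
| Atom of nat & nat
| FNot of formula
| FAnd of formula & formula
| FOr of formula & formula.

Fixpoint eval (F : formula) (x : nat -> nat) : bool :=
  match F with
  | FTrue => true | FFalse => false
  | Atom i j => x i <= x j
  | FNot G => ~~ eval G x
  | FAnd G H => eval G x && eval H x
  | FOr G H => eval G x || eval H x
  end.

Fixpoint wf (n : nat) (F : formula) : bool :=
  match F with
  | FTrue | FFalse => true
  | Atom i j => (0 < i <= n) && (0 < j <= n)
  | FNot G => wf n G
  | FAnd G H | FOr G H => wf n G && wf n H
  end.

Fixpoint subst (psi : nat -> nat) (F : formula) : formula :=
  match F with
  | FTrue => FTrue | FFalse => FFalse
  | Atom i j => Atom (psi i) (psi j)
  | FNot G => FNot (subst psi G)
  | FAnd G H => FAnd (subst psi G) (subst psi H)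
  | FOr G H => FOr (subst psi G) (subst psi H)
  end.

Definition FEq i j := FAnd (Atom i j) (Atom j i).
Definition FNeq i j := FNot (FEq i j).

Fixpoint clause (I : seq (nat * nat)) : formula :=
  match I with
  | [::] => FFalse
  | (i, j) :: I' => FOr (FNeq i j) (clause I')
  end.

Definition VC (I : seq (nat * nat)) : seq nat := flatten [seq [:: p.1; p.2] | p <- I].

Inductive simC (I : seq (nat * nat)) : nat -> nat -> Prop :=
| simC_refl i : i \in VC I -> simC I i i
| simC_edge i j : (i, j) \in I -> simC I i j
| simC_sym i j : simC I i j -> simC I j i
| simC_trans i j l : simC I i j -> simC I j l -> simC I i l.

(* Noncommutative series in y_1, y_2, ...: coefficient of each word
   (a word y_{a_1}...y_{a_p} is the sequence [:: a_1; ...; a_p]). *)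
Definition series := seq nat -> nat.

(* S_F for a scheduling problem F on n elements: solutions f : [n] -> P,
   monomial y_{f(1)} ... y_{f(n)}. *)
Definition sched_series (n : nat) (F : formula) : series :=
  fun w => ((size w == n) && all (fun a => 0 < a) w
            && eval F (fun i => nth 0 w i.-1) : nat).

Definition psi (m : nat) (O : seq (seq nat)) (j : nat) : nat :=
  if j < m then j else m + size O - 1 - find (fun o => j \in o) O.

Definition contraction (m : nat) (O : seq (seq nat)) (F : formula) : formula :=
  subst (psi m O) F.

Definition up (r : seq nat) (u : seq nat) : seq nat :=
  take (size u - size r) u ++
  flatten [seq nseq e.+1 a | '(a, e) <- zip (drop (size u - size r) u) (rev r)].

Fixpoint words_over (A : seq nat) (l : nat) : seq (seq nat) :=
  match l with
  | 0 => [:: [::]]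
  | l'.+1 => [seq a :: u | a <- A, u <- words_over A l']
  end.

(* termwise (linear) extension of induction to series: the coefficient of w
   is the sum of the coefficients of all monomials u (of length >= k) with
   up r u = w; such u have length size w - sumn r and letters among those
   of w, so the enumeration below covers all of them (each exactly once). *)
Definition induce (r : seq nat) (F : series) : series :=
  fun w => \sum_(u <- words_over (undup w) (size w - sumn r))
             (if (size r <= size u) && (up r u == w) then F u else 0).

(* Main.v *)
Require Import Defs.
From mathcomp Require Import all_boot zify.
Set Implicit Arguments. Unset Strict Implicit. Unset Printing Implicit Defensive.

Lemma eval_subst f F x : eval (subst f F) x = eval F (fun i => x (f i)).
Proof. by elim: F => //= [G -> | G -> H -> | G -> H ->]. Qed.

Lemma eval_wf_ext n F x y : wf n F -> (forall i, 0 < i <= n -> x i = y i) ->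
  eval F x = eval F y.
Proof.
move=> + E; elim: F => //=.
- by move=> i j /andP[Hi Hj]; rewrite !E.
- by move=> G IH /IH ->.
- by move=> G IG H IH /andP[/IG -> /IH ->].
- by move=> G IG H IH /andP[/IG -> /IH ->].
Qed.

Lemma clause_false I x : ~~ eval (clause I) x = all (fun p => x p.1 == x p.2) I.
Proof.
elim: I => //= [[i j] I IH] /=; rewrite negb_or IH negbK eqn_leq //.
Qed.

Lemma mem_VC I i j : (i, j) \in I -> (i \in VC I) && (j \in VC I).
Proof.
elim: I => //= p I IH; rewrite in_cons => /orP[/eqP <-|/IH/andP[H1 H2]].
  by rewrite !in_cons !eqxx orbT.
by rewrite !in_cons H1 H2 !orbT.
Qed.

Lemma simC_VC I a b : simC I a b -> (a \in VC I) && (b \in VC I).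
Proof.
elim => //=; [by move=> i ->| by move=> i j /mem_VC| by move=> i j _ /andP[-> ->]|].
by move=> i j l _ /andP[-> _] _ /andP[_ ->].
Qed.

Lemma simC_eq I (x : nat -> nat) a b :
  (forall p, p \in I -> x p.1 = x p.2) -> simC I a b -> x a = x b.
Proof.
move=> E; elim.
- by [].
- by move=> i j /E.
- by move=> i j _ ->.
- by move=> i j l _ -> _ ->.
Qed.

Lemma words_over_mem A l u : (u \in words_over A l) = (size u == l) && all (mem A) u.
Proof.
elim: l u => [|l IH] [|a u] /=.
- by rewrite mem_seq1.
- by rewrite mem_seq1.
- apply/negbTE/allpairsP => [[p [_ _ //]]].
- apply/allpairsP/idP => [[[b v] /= [Hb Hv [-> ->]]]|/andP[Hs /andP[Ha Hu]]].
    by move: Hv; rewrite IH eqSS Hb => ->.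
  by exists (a, u); split=> //; rewrite IH -eqSS Hs Hu.
Qed.

Lemma words_over_uniq A l : uniq A -> uniq (words_over A l).
Proof.
move=> UA; elim: l => [|l IH] //=.
apply: allpairs_uniq => // [[a u]] [b v] _ _ /= [-> ->] //.
Qed.

Lemma sorted_flatten (ss : seq (seq nat)) :
  (forall i, i < size ss -> sorted ltn (nth [::] ss i)) ->
  (forall i j, i < j < size ss -> forall a b, a \in nth [::] ss i -> b \in nth [::] ss j -> a < b) ->
  sorted ltn (flatten ss).
Proof.
elim: ss => [|s ss IH] //= H1 H2.
rewrite (sorted_pairwise ltn_trans) pairwise_cat -!(sorted_pairwise ltn_trans).
rewrite (H1 0) // IH ?andbT.
- apply/allrelP => a b Ha /flattenP [t /(nthP [::]) [j Hj <-] Hb].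
  by apply: (H2 0 j.+1) => //; rewrite /= ltnS Hj.
- by move=> i Hi; apply: (H1 i.+1).
- by move=> i j Hij; apply: (H2 i.+1 j.+1).
Qed.

Lemma sumn_size (O : seq (seq nat)) : all (fun o => 0 < size o) O ->
  sumn [seq size o | o <- O] = sumn [seq (size o).-1 | o <- O] + size O.
Proof. elim: O => //= o O IH /andP[H1 /IH ->]; lia. Qed.

Lemma map_const (f : nat -> nat) c s : (forall x, x \in s -> f x = c) ->
  map f s = nseq (size s) c.
Proof.
elim: s => //= a s IH H; rewrite H ?mem_head // IH // => x Hx.
by apply: H; rewrite in_cons Hx orbT.
Qed.


Theorem lemma3p7 (n m : nat) (S' : formula) (I : seq (nat * nat))
  (O : seq (seq nat)) :
  wf n S' ->
  (* C = clause I is contractible *)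
  0 < m <= n ->
  (forall x, x \in VC I <-> m <= x <= n) ->
  (* O = [:: O_1; ...; O_k] lists the ~_C classes *)
  (forall i, i < size O -> uniq (nth [::] O i) /\
     exists a, a \in VC I /\ forall x, x \in nth [::] O i <-> simC I a x) ->
  (forall x, x \in VC I -> exists2 i, i < size O & x \in nth [::] O i) ->
  (forall i j, i < j < size O ->
     forall a b, a \in nth [::] O i -> b \in nth [::] O j -> b < a) ->
  let r := [seq (size o).-1 | o <- O] in
  forall w,
    sched_series n (FAnd S' (FNot (clause I))) w =
    induce r (sched_series (n - sumn r) (contraction m O S')) w.
Proof.
move=> wfS /andP[m0 mn] HVC HO Hcov Hord r w.
set k := size O.
have HnthO : forall i x, i < k -> x \in nth [::] O i -> m <= x <= n.
  move=> i x Hi Hx; have [_ [a [_ Ha]]] := HO i Hi.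
  by apply/HVC; have /simC_VC/andP[_ ->] := (proj1 (Ha x) Hx).
have Hne : forall i, i < k -> 0 < size (nth [::] O i).
  move=> i Hi; have [_ [a [Ha1 Ha]]] := HO i Hi.
  have : a \in nth [::] O i by apply/Ha; apply: simC_refl.
  by case: (nth [::] O i).
have Hfind : forall i x, i < k -> x \in nth [::] O i -> find (fun o => x \in o) O = i.
  move=> i x Hi Hx.
  have hf : has (fun o => x \in o) O by apply/(has_nthP [::]); exists i.
  have Hj : find (fun o => x \in o) O < k by rewrite -has_find.
  have Hxj := nth_find [::] hf.
  case: (ltngtP (find (fun o => x \in o) O) i) => // H.
    by have := Hord _ _ (introT andP (conj H Hi)) _ _ Hxj Hx; rewrite ltnn.
  by have := Hord _ _ (introT andP (conj H Hj)) _ _ Hx Hxj; rewrite ltnn.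
have Hcls : forall x, m <= x <= n -> exists2 i, i < k & x \in nth [::] O i.
  by move=> x /HVC /Hcov.
have Hpsi_lo : forall j, j < m -> psi m O j = j.
  by move=> j Hj; rewrite /psi Hj.
have Hpsi_hi : forall i x, i < k -> x \in nth [::] O i -> psi m O x = m + k - 1 - i.
  move=> i x Hi Hx; have /andP[H1 _] := HnthO i x Hi Hx.
  by rewrite /psi ltnNge H1 /= (Hfind i x).
have Hsame : forall i a b, i < k -> a \in nth [::] O i -> simC I a b -> b \in nth [::] O i.
  move=> i a b Hi Ha Hab; have [_ [a0 [_ H0]]] := HO i Hi.
  by apply/H0; apply: simC_trans Hab; apply/H0.
set ss := [seq sort leq o | o <- rev O].
have Hss : forall t, t < k -> nth [::] ss t = sort leq (nth [::] O (k - t.+1)).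
  by move=> t Ht; rewrite (nth_map [::]) ?size_rev // nth_rev.
have Hszss : size ss = k by rewrite size_map size_rev.
have HL : flatten ss = iota m (n - m + 1).
  apply: (irr_sorted_eq ltn_trans ltnn); last 1 first.
  - move=> x; rewrite mem_iota; apply/flattenP/idP.
      move=> [s /mapP [o Ho ->]]; rewrite mem_sort => Hx.
      move: Ho; rewrite mem_rev => /(nthP [::]) [i Hi Hoi].
      by have := HnthO i x Hi; rewrite Hoi => /(_ Hx); lia.
    move=> Hx; have [i Hi Hxi] := Hcls x ltac:(lia).
    exists (sort leq (nth [::] O i)); last by rewrite mem_sort.
    by apply: map_f; rewrite mem_rev mem_nth.
  - apply: sorted_flatten.
      move=> t; rewrite Hszss => Ht; rewrite Hss // ltn_sorted_uniq_leq sort_uniq.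
      by rewrite (sort_sorted leq_total) andbT; apply: (proj1 (HO _ _)); lia.
    move=> t t' /andP[Htt' Ht'] a b; rewrite Hszss in Ht'.
    rewrite !Hss ?mem_sort //; last by lia.
    move=> Ha Hb; apply: (Hord (k - t'.+1) (k - t.+1)) => //; lia.
  - exact: iota_ltn_sorted.
have K1 : sumn r + k = n - m + 1.
  have := congr1 size HL; rewrite size_iota size_flatten => <-.
  rewrite /shape /ss -map_comp.
  rewrite (eq_map (g := size) (fun o => size_sort _ _)) map_rev sumn_rev sumn_size //.
  by apply/(all_nthP [::]) => i Hi; apply: Hne.
set n' := m.-1 + k.
pose Ex u := [seq nth 0 u (psi m O j).-1 | j <- iota 1 n].
have Hszr : size r = k by rewrite size_map.
have K2 : forall u, size u = n' -> up r u = Ex u.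
  move=> u Hu; rewrite /up Hszr Hu /Ex.
  have -> : n' - k = m.-1 by lia.
  have -> : n = m.-1 + (n - m + 1) by lia.
  rewrite iotaD map_cat; congr (_ ++ _).
    apply: (@eq_from_nth _ 0); first by rewrite size_map size_iota size_takel //; lia.
    move=> i; rewrite size_takel; last by lia.
    move=> Hi; rewrite nth_take // (nth_map 0) ?size_iota // nth_iota // Hpsi_lo //; lia.
  have -> : 1 + m.-1 = m by lia.
  rewrite -HL map_flatten; congr flatten.
  apply: (@eq_from_nth _ [::]).
    by rewrite size_map size_zip size_drop size_rev Hszr Hu size_map Hszss; lia.
  move=> t; rewrite size_map size_zip size_drop size_rev Hszr Hu => Ht.
  have Htk : t < k by lia.
  rewrite (nth_map (0, 0)); last by rewrite size_zip size_drop size_rev Hszr Hu.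
  rewrite nth_zip; last by rewrite size_drop size_rev Hszr Hu; lia.
  rewrite (nth_map [::]) ?Hszss // Hss // nth_drop nth_rev ?Hszr //.
  rewrite (nth_map [::]) -/k; last by lia.
  have Hi : k - t.+1 < k by lia.
  rewrite (@map_const _ (nth 0 u (m.-1 + t))) ?size_sort.
    by rewrite prednK //; apply: Hne.
  move=> x; rewrite mem_sort => Hx; rewrite (Hpsi_hi _ _ Hi Hx); congr nth; lia.
have Hhead : forall i, i < k -> head 0 (nth [::] O i) \in nth [::] O i.
  by move=> i Hi; case: (nth [::] O i) (Hne i Hi) => //= a s _; rewrite mem_head.
pose rep p := if p < m then p else head 0 (nth [::] O (m + k - 1 - p)).
have Hrep : forall p, 0 < p <= n' -> (0 < rep p <= n) /\ psi m O (rep p) = p.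
  move=> p; rewrite /n' => Hp; rewrite /rep; case: (ltnP p m) => Hpm.
    by split; [lia | apply: Hpsi_lo].
  have Hi : m + k - 1 - p < k by lia.
  have Hh := Hhead _ Hi; have := HnthO _ _ Hi Hh.
  by move=> Hb; split; [lia | rewrite (Hpsi_hi _ _ Hi Hh); lia].
have Hpsi_rng : forall j, 0 < j <= n -> 0 < psi m O j <= n'.
  move=> j Hj; rewrite /n'; case: (ltnP j m) => Hjm; first by rewrite Hpsi_lo //; lia.
  have [i Hi Hji] := Hcls j ltac:(lia).
  by rewrite (Hpsi_hi _ _ Hi Hji); lia.
have HExnth : forall u j, 0 < j <= n -> nth 0 (Ex u) j.-1 = nth 0 u (psi m O j).-1.
  move=> u j Hj; rewrite /Ex (nth_map 0) ?size_iota; last by lia.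
  by rewrite nth_iota; [congr (nth _ _ (psi _ _ _).-1); lia | lia].
have HszEx : forall u, size (Ex u) = n by move=> u; rewrite size_map size_iota.
have K3 : forall u, eval (contraction m O S') (fun i => nth 0 u i.-1) =
                    eval S' (fun i => nth 0 (Ex u) i.-1).
  move=> u; rewrite /contraction eval_subst; apply: (eval_wf_ext wfS) => i Hi.
  by rewrite HExnth.
pose X := fun i => nth 0 w i.-1.
pose Lb := (size w == n) && all (fun a => 0 < a) w && (eval S' X && ~~ eval (clause I) X).
pose Fb u := (size u == n - sumn r) && all (fun a => 0 < a) u &&
             eval (contraction m O S') (fun i => nth 0 u i.-1).
pose gb u := [&& size r <= size u, up r u == w & Fb u].
pose u0 := [seq nth 0 w (rep p).-1 | p <- iota 1 n'].
have Hszu0 : size u0 = n' by rewrite size_map size_iota.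
have Hu0nth : forall p, 0 < p <= n' -> nth 0 u0 p.-1 = nth 0 w (rep p).-1.
  move=> p Hp; rewrite (nth_map 0) ?size_iota; last by move: Hp; rewrite /n'; lia.
  by rewrite nth_iota; [congr (nth _ _ (rep _).-1); lia | move: Hp; rewrite /n'; lia].
have HA : Lb -> gb u0.
  move=> /andP[/andP[/eqP Hw Hpos] /andP[HS HC]].
  move: HC; rewrite clause_false => /allP Hedges.
  have HwEx : w = Ex u0.
    apply: (@eq_from_nth _ 0); first by rewrite HszEx.
    move=> j0; rewrite Hw => Hj0.
    have Hj : 0 < j0.+1 <= n by lia.
    rewrite -[j0]/(j0.+1.-1) HExnth // Hu0nth; last exact: Hpsi_rng.
    case: (ltnP j0.+1 m) => Hjm; first by rewrite Hpsi_lo // /rep Hjm.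
    have [i Hi Hji] := Hcls j0.+1 ltac:(lia).
    rewrite (Hpsi_hi _ _ Hi Hji) /rep ifF; last by apply/negbTE; rewrite -leqNgt; lia.
    have -> : m + k - 1 - (m + k - 1 - i) = i by lia.
    have [_ [a0 [_ H0]]] := HO i Hi.
    apply: (simC_eq (x := X) (b := head 0 (nth [::] O i)) (a := j0.+1)); first by move=> p /Hedges /eqP.
    apply: simC_sym; apply: (simC_trans _ (proj1 (H0 _) Hji)); apply: simC_sym; apply/H0; exact: Hhead.
  apply/and3P; split.
  - by rewrite Hszu0 Hszr /n'; lia.
  - by rewrite K2 // -HwEx.
  - apply/andP; split; first (apply/andP; split).
    + by rewrite Hszu0 /n'; apply/eqP; lia.
    + apply/(all_nthP 0) => p0; rewrite Hszu0 => Hp0.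
      have Hp : 0 < p0.+1 <= n' by move: Hp0; rewrite /n'; lia.
      rewrite -[p0]/(p0.+1.-1) Hu0nth //; have [Hr _] := Hrep _ Hp.
      by apply: (allP Hpos); apply: mem_nth; rewrite Hw; lia.
    + by rewrite K3 -HwEx.
have HB : forall u, gb u -> u = u0 /\ Lb.
  move=> u /and3P[Hszk /eqP Hup /andP[/andP[/eqP Hsz Hpos] Hev]].
  have Hsz' : size u = n' by rewrite /n'; lia.
  have HwEx : w = Ex u by rewrite -Hup K2.
  split.
    apply: (@eq_from_nth _ 0); first by rewrite Hszu0.
    move=> p0; rewrite Hsz' => Hp0.
    have Hp : 0 < p0.+1 <= n' by move: Hp0; rewrite /n'; lia.
    have [Hr Hpr] := Hrep _ Hp.
    by rewrite -[p0]/(p0.+1.-1) Hu0nth // HwEx HExnth // Hpr.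
  rewrite /Lb /X HwEx HszEx eqxx /=; apply/andP; split.
    apply/(all_nthP 0) => j0; rewrite HszEx => Hj0.
    have Hj : 0 < j0.+1 <= n by lia.
    rewrite -[j0]/(j0.+1.-1) HExnth //; apply: (allP Hpos); apply: mem_nth.
    by have := Hpsi_rng _ Hj; rewrite Hsz' /n'; lia.
  apply/andP; split; first by rewrite -K3.
  rewrite clause_false; apply/allP => [[a b]] Hab /=.
  have /andP[/HVC Ha /HVC Hb] := mem_VC Hab.
  have [i Hi Hai] := Hcls a Ha.
  have Hbi := Hsame _ _ _ Hi Hai (simC_edge Hab).
  rewrite /X !HExnth //; try lia.
  by rewrite (Hpsi_hi _ _ Hi Hai) (Hpsi_hi _ _ Hi Hbi).
have -> : sched_series n (FAnd S' (FNot (clause I))) w = Lb by [].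
rewrite /induce.
rewrite (eq_bigr (fun u => nat_of_bool (gb u))); last first.
  by move=> u _; rewrite /gb /sched_series; case: (size r <= size u); case: (up r u == w).
set s := words_over _ _.
have Us : uniq s by apply: words_over_uniq; apply: undup_uniq.
case HLb: Lb.
  have Hu0s : u0 \in s.
    move: (HLb) => /andP[/andP[/eqP Hw _] _].
    rewrite words_over_mem Hszu0 Hw; apply/andP; split.
      by apply/eqP; rewrite /n'; lia.
    apply/(all_nthP 0) => p0; rewrite Hszu0 => Hp0.
    have Hp : 0 < p0.+1 <= n' by move: Hp0; rewrite /n'; lia.
    rewrite -[p0]/(p0.+1.-1) Hu0nth //; have [Hr _] := Hrep _ Hp.
    have : nth 0 w (rep p0.+1).-1 \in w by apply: mem_nth; rewrite Hw; lia.
    by rewrite -mem_undup.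
  rewrite (big_rem u0) //= (HA HLb) big1_seq // => u /andP[_ Hu].
  case Hg: (gb u) => //; have [Heq _] := HB u Hg.
  by rewrite Heq mem_rem_uniqF in Hu.
rewrite big1_seq // => u _; case Hg: (gb u) => //.
by have [_] := HB u Hg; rewrite HLb.
Qed.
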